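(* Consider a connected open set $U\subset \mathrm{K}^{\circ}$. (i) For any $\omega\in \Sigma$, there is an $N\in \mathbb{N}_0$ such that $\mathcal{K}_{\omega}^N(U)$ is connected and $\mathcal{K}^N_{\omega}(U)\cap \mathbf{A}\neq \emptyset$. (ii) There are $\omega \in \Sigma, M\in \mathbb{N}_0$ such that $\mathcal{K}^M_\omega(U) \supseteq A_\alpha \cap A_\beta$ for some $\alpha, \beta \in \{1,2,3\}, \alpha\neq \beta$.
   Context: Fix a parameter $v\in(0,1/2)$. Let $\mathrm{K}^{\circ}$ denote the Kasner circle $\{(\Sigma_+,\Sigma_-)\,:\,\Sigma_+^2+\Sigma_-^2=1\}$, parametrized by the angle $\varphi$ via $(\Sigma_+,\Sigma_-)=(\cos\varphi,\sin\varphi)$. Let $A_1:=\{\Sigma_+\ge v\}\cap \mathrm{K}^{\circ}$, i.e. $\varphi\in[-\arccos v,\arccos v]$, and let $A_2,A_3$ be its images under rotation by $\pm 2\pi/3$ (namely $A_2=\{-(\Sigma_++\sqrt3\Sigma_-)/2\ge v\}$, $A_3=\{-(\Sigma_+-\sqrt3\Sigma_-)/2\ge v\}$). On $A_1$ define $\mathcal{K}_1(\varphi):=\pi-2\arctan\big(\tfrac{1+v}{1-v}\tan(\varphi/2)\big)$, and let $\mathcal{K}_2,\mathcal{K}_3$ on $A_2,A_3$ be the maps obtained from $\mathcal{K}_1$ by the same rotations. Set $\mathbf{A}:=(A_1\cap A_2)\cup(A_2\cap A_3)\cup(A_1\cap A_3)$. For $\mu\in\{1,2\},\nu\in\{2,3\},\zeta\in\{1,3\}$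 define $\mathcal{K}_{\mu\nu\zeta}:\mathrm{K}^{\circ}\to\mathrm{K}^{\circ}$ by $\mathcal{K}_{\mu\nu\zeta}(p)=\mathcal{K}_\alpha(p)$ if $p\in A_\alpha\setminus\mathbf{A}$, $=\mathcal{K}_\mu(p)$ if $p\in A_1\cap A_2$, $=\mathcal{K}_\nu(p)$ if $p\in A_2\cap A_3$, $=\mathcal{K}_\zeta(p)$ if $p\in A_1\cap A_3$. Let $\Sigma$ be the space of sequences $\omega=(\mu_n,\nu_n,\zeta_n)_{n\ge1}$ with $\mu_n\in\{1,2\},\nu_n\in\{2,3\},\zeta_n\in\{1,3\}$, and for $\omega=(\omega_n)$ set $\mathcal{K}^n_\omega:=\mathcal{K}_{\omega_n}\circ\cdots\circ\mathcal{K}_{\omega_1}$, $\mathcal{K}^0_\omega=\mathrm{Id}$. *)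

(* Defs.v *)
From mathcomp Require Import all_boot all_order all_algebra.
From mathcomp Require Import all_classical all_reals all_analysis.
Import Order.TTheory GRing.Theory Num.Theory.
Import numFieldNormedType.Exports.
Local Open Scope ring_scope.
Local Open Scope classical_set_scope.

Set Implicit Arguments. Unset Strict Implicit. Unset Printing Implicit Defensive.

(* The plane R^2 is modelled as R * R, points p = (Sigma_+, Sigma_-). *)

Definition Kcircle {R : realType} : set (R * R) :=
  [set p | p.1 ^+ 2 + p.2 ^+ 2 = 1].

Definition cis {R : realType} (phi : R) : R * R := (cos phi, sin phi).

Definition rot {R : realType} (t : R) (p : R * R) : R * R :=
  (cos t * p.1 - sin t * p.2, sin t * p.1 + cos t * p.2).

Definition rho {R : realType} : R * R -> R * R := rot (2 * pi / 3).
Definition rhoinv {R : realType} : R * R -> R * R := rot (- (2 * pi / 3)).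

Definition A1 {R : realType} (v : R) : set (R * R) :=
  [set p | Kcircle p /\ v <= p.1].
Definition A2 {R : realType} (v : R) : set (R * R) :=
  [set p | Kcircle p /\ v <= - (p.1 + Num.sqrt 3 * p.2) / 2].
Definition A3 {R : realType} (v : R) : set (R * R) :=
  [set p | Kcircle p /\ v <= - (p.1 - Num.sqrt 3 * p.2) / 2].

Definition Aidx {R : realType} (v : R) (a : nat) : set (R * R) :=
  match a with 1%N => A1 v | 2%N => A2 v | _ => A3 v end.

Definition Abold {R : realType} (v : R) : set (R * R) :=
  (A1 v `&` A2 v) `|` (A2 v `&` A3 v) `|` (A1 v `&` A3 v).

(* angle phi in (-pi/2, pi/2) of a point p of the circle with p.1 > 0
   (in particular of every point of A1, since v > 0) *)
Definition phiA1 {R : realType} (p : R * R) : R := atan (p.2 / p.1).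

Definition K1 {R : realType} (v : R) (p : R * R) : R * R :=
  cis (pi - 2 * atan ((1 + v) / (1 - v) * tan (phiA1 p / 2))).

(* A2 = rho^{-1}(A1), A3 = rho(A1), rho = rotation by 2pi/3;
   K2, K3 are the conjugates of K1 by these rotations *)
Definition K2 {R : realType} (v : R) (p : R * R) : R * R :=
  rhoinv (K1 v (rho p)).
Definition K3 {R : realType} (v : R) (p : R * R) : R * R :=
  rho (K1 v (rhoinv p)).

Definition Kidx {R : realType} (v : R) (a : nat) : R * R -> R * R :=
  match a with 1%N => K1 v | 2%N => K2 v | _ => K3 v end.

(* K_{mu nu zeta}; a triple t = (mu, nu, zeta).  Outside the circle
   (irrelevant) it is the identity. *)
Definition Kmix {R : realType} (v : R) (t : nat * nat * nat) (p : R * R)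
  : R * R :=
  if p \in A1 v `&` A2 v then Kidx v t.1.1 p
  else if p \in A2 v `&` A3 v then Kidx v t.1.2 p
  else if p \in A1 v `&` A3 v then Kidx v t.2 p
  else if p \in A1 v then K1 v p
  else if p \in A2 v then K2 v p
  else if p \in A3 v then K3 v p
  else p.

(* the sequence space Sigma; omega_{n} (n >= 1) is stored as omega (n-1) *)
Definition inSigma (omega : nat -> nat * nat * nat) : Prop :=
  forall n, ((omega n).1.1 = 1 \/ (omega n).1.1 = 2)%N /\
            ((omega n).1.2 = 2 \/ (omega n).1.2 = 3)%N /\
            ((omega n).2 = 1 \/ (omega n).2 = 3)%N.

Fixpoint Kiter {R : realType} (v : R) (omega : nat -> nat * nat * nat)
  (n : nat) : R * R -> R * R :=
  match n with
  | 0%N => id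
  | m.+1 => fun p => Kmix v (omega m) (Kiter v omega m p)
  end.

(* Main.v *)
Require Import Defs.
From mathcomp Require Import all_boot all_order all_algebra.
From mathcomp Require Import all_classical all_reals all_analysis.
From mathcomp Require Import ring lra.
Import Order.TTheory GRing.Theory Num.Theory.
Import numFieldNormedType.Exports.
Local Open Scope ring_scope.
Local Open Scope classical_set_scope.
Set Implicit Arguments. Unset Strict Implicit. Unset Printing Implicit Defensive.

Ltac rl := repeat (apply/andP; split); lra.
Ltac nz := repeat (apply/andP; split); first [apply: lt0r_neq0; lra | apply: ltr0_neq0; lra].

Lemma cis_rot (R : realType) (t th : R) : Defs.rot t (cis th) = cis (th + t).
Proof. rewrite /Defs.rot /cis /= cosD sinD; congr pair; ring. Qed.

Lemma cos3 (R : realType) (x : R) : cos (3 * x) = 4 * cos x ^+ 3 - 3 * cos x.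
Proof.
have -> : 3 * x = x + x + x by ring.
rewrite !cosD !sinD.
transitivity (cos x ^+ 3 - 3 * cos x * sin x ^+ 2); first by ring.
rewrite sin2cos2; ring.
Qed.

Lemma cos_pi3 (R : realType) : cos (pi / 3 : R) = 1 / 2.
Proof.
have h3 := cos3 (pi / 3 : R).
rewrite (_ : 3 * (pi / 3) = pi :> R) in h3; last by field.
have hp := @pi_gt0 R.
have c0 : 0 < cos (pi / 3 : R).
  apply: cos_gt0_pihalf; apply/andP; split; lra.
rewrite cospi in h3.
have : (cos (pi / 3 : R) + 1) * (2 * cos (pi / 3) - 1) ^+ 2 = 0 by nra.
move/eqP; rewrite mulf_eq0 sqrf_eq0 => /orP[/eqP|/eqP]; lra.
Qed.

Lemma sqrt3_sq (R : realType) : Num.sqrt (3 : R) ^+ 2 = 3.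
Proof. by rewrite sqr_sqrtr // ler0n. Qed.

Lemma sqrt3_gt0 (R : realType) : 0 < Num.sqrt (3 : R).
Proof. by rewrite sqrtr_gt0 ltr0n. Qed.

Lemma sin_pi3 (R : realType) : sin (pi / 3 : R) = Num.sqrt 3 / 2.
Proof.
have hp := @pi_gt0 R.
have s0 : 0 < sin (pi / 3 : R).
  apply: sin_gt0_pi; apply/andP; split; lra.
have h := cos2Dsin2 (pi / 3 : R); rewrite cos_pi3 in h.
have q := sqrt3_sq R; have q0 := sqrt3_gt0 R.
have : (sin (pi / 3 : R) - Num.sqrt 3 / 2) * (sin (pi / 3) + Num.sqrt 3 / 2) = 0 by nra.
move/eqP; rewrite mulf_eq0 => /orP[/eqP|/eqP]; lra.
Qed.

Lemma cos_2pi3 (R : realType) : cos (2 * pi / 3 : R) = - 1 / 2.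
Proof.
have -> : 2 * pi / 3 = pi / 3 + pi / 3 :> R by field.
rewrite cosD cos_pi3 sin_pi3; have := sqrt3_sq R; lra.
Qed.

Lemma sin_2pi3 (R : realType) : sin (2 * pi / 3 : R) = Num.sqrt 3 / 2.
Proof.
have -> : 2 * pi / 3 = pi / 3 + pi / 3 :> R by field.
rewrite sinD cos_pi3 sin_pi3; lra.
Qed.

Definition cc (R : realType) (v : R) : R := (1 + v) / (1 - v).
Definition GG (R : realType) (v th : R) : R := 2 * atan (cc v * tan (th / 2)).

Lemma GG_derive (R : realType) (v th : R) : - pi < th < pi ->
  is_derive th 1 (GG v)
   (cc v * (1 + tan (th / 2) ^+ 2) / (1 + (cc v * tan (th / 2)) ^+ 2)).
Proof.
move=> /andP[h1 h2].
have cth : cos (th / 2) != 0.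
  apply/lt0r_neq0/cos_gt0_pihalf; apply/andP; split; lra.
have d1 : is_derive th 1 (fun x : R => x / 2) (1 / 2).
  have H := is_deriveM (f:=id) (g:=cst (2^-1 : R)) (x:=th) (v:=1) (df:=1) (dg:=0) (is_derive_id _ _) (is_derive_cst _ _ _).
  apply: (is_derive_eq H).
  by rewrite /= scaler0 add0r /GRing.scale /= mulr1 div1r.
have d2 : is_derive th 1 (fun x : R => tan (x / 2)) ((cos (th / 2))^-2 * (1 / 2)).
  exact: (@is_derive1_comp R tan (fun x : R => x / 2) th _ _ (is_derive_tan cth) d1).
have d3 : is_derive th 1 (fun x : R => cc v * tan (x / 2)) (cc v * ((cos (th / 2))^-2 * (1 / 2))).
  have := @is_deriveZ R R R (fun x : R => tan (x / 2)) (cc v) th 1 _ d2.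
  by rewrite /GRing.scale /=.
have d4 := @is_derive1_comp R atan (fun x : R => cc v * tan (x / 2)) th _ _ (is_derive1_atan _) d3.
have d5 := @is_deriveZ R R R _ 2 th 1 _ d4.
rewrite /GRing.scale /= in d5.
apply: is_derive_eq.
rewrite cos2_tan2 //.
have : 0 < 1 + (cc v * tan (th / 2)) ^+ 2 by apply: ltr_pwDl => //; exact: sqr_ge0.
move=> hp; field; exact: lt0r_neq0.
Qed.

Lemma GG_cont (R : realType) (v th : R) : - pi < th < pi -> {for th, continuous (GG v)}.
Proof.
move=> h; have [dd _] := GG_derive v h.
exact/differentiable_continuous/derivable1_diffP.
Qed.

Lemma cos_lt_mono (R : realType) (x y : R) : 0 <= x <= pi -> 0 <= y <= pi ->
  (cos x < cos y) = (y < x).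
Proof.
move=> hx hy; apply: ltr_cos; rewrite in_itv /=; [exact: hy|exact: hx].
Qed.

Lemma cos_le_mono (R : realType) (x y : R) : 0 <= x <= pi -> 0 <= y <= pi ->
  (cos x <= cos y) = (y <= x).
Proof. by move=> hx hy; rewrite !leNgt cos_lt_mono. Qed.

Definition aa (R : realType) (v : R) : R := acos v.

Lemma aa_cos (R : realType) (v : R) : 0 < v < 1 / 2 -> cos (aa v) = v.
Proof. move=> h; rewrite /aa acosK // in_itv /=; apply/andP; split; lra. Qed.

Lemma aa_range (R : realType) (v : R) : 0 < v < 1 / 2 -> pi / 3 < aa v < pi / 2.
Proof.
move=> h; have hp := @pi_gt0 R.
have h0 : 0 <= aa v <= pi.
  rewrite /aa acos_ge0 ?acos_lepi //; apply/andP; split; lra.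
apply/andP; split.
- rewrite -cos_lt_mono //; last by apply/andP; split; lra.
  by rewrite aa_cos // cos_pi3; lra.
- rewrite -cos_lt_mono //; last by apply/andP; split; lra.
  by rewrite aa_cos // cos_pihalf; lra.
Qed.

Lemma tan_aa2 (R : realType) (v : R) : 0 < v < 1 / 2 ->
  tan (aa v / 2) ^+ 2 = (1 - v) / (1 + v).
Proof.
move=> h; have := aa_range h; have hp := @pi_gt0 R => ha.
have c0 : 0 < cos (aa v / 2) by apply: cos_gt0_pihalf; apply/andP; split; lra.
have e : cos (aa v) = cos (aa v / 2) ^+ 2 *+ 2 - 1.
  by rewrite -cos_mulr2n; congr cos; rewrite mulr2n; field.
rewrite aa_cos // in e.
rewrite /tan expr_div_n sin2cos2.
have q : cos (aa v / 2) ^+ 2 = (1 + v) / 2 by rewrite mulr2n in e; lra.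
rewrite q; field; apply: lt0r_neq0; lra.
Qed.

Definition ff (R : realType) (v T : R) : R :=
  cc v * (1 + T ^+ 2) / (1 + (cc v * T) ^+ 2).

Lemma cc_gt1 (R : realType) (v : R) : 0 < v < 1 / 2 -> 1 < cc v.
Proof.
move=> h; rewrite /cc ltr_pdivlMr; last lra.
lra.
Qed.

Lemma ff_mono (R : realType) (v T Tb : R) : 0 < v < 1 / 2 ->
  T ^+ 2 <= Tb ^+ 2 -> ff v Tb <= ff v T.
Proof.
move=> h hT; have c1 := cc_gt1 h; rewrite /ff.
have p1 : 0 < 1 + (cc v * T) ^+ 2 by apply: ltr_pwDl => //; exact: sqr_ge0.
have p2 : 0 < 1 + (cc v * Tb) ^+ 2 by apply: ltr_pwDl => //; exact: sqr_ge0.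
rewrite -subr_ge0.
have -> : cc v * (1 + T ^+ 2) / (1 + (cc v * T) ^+ 2) -
   cc v * (1 + Tb ^+ 2) / (1 + (cc v * Tb) ^+ 2) =
   cc v * (cc v ^+ 2 - 1) * (Tb ^+ 2 - T ^+ 2) / ((1 + (cc v * T) ^+ 2) * (1 + (cc v * Tb) ^+ 2)).
  by field; apply/andP; split; apply: lt0r_neq0.
apply: divr_ge0; last by apply: mulr_ge0; lra.
apply: mulr_ge0; last lra.
apply: mulr_ge0; first lra.
rewrite subr_ge0; nra.
Qed.

Lemma tan_sq_le (R : realType) (x B : R) : 0 <= B < pi / 2 -> - B <= x <= B ->
  tan x ^+ 2 <= tan B ^+ 2.
Proof.
move=> hB hx; have hp := @pi_gt0 R.
have mono : forall y z : R, - (pi / 2) < y < pi / 2 -> - (pi / 2) < z < pi / 2 ->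
    y <= z -> tan y <= tan z.
  move=> y z hy hz; rewrite !le_eqVlt => /orP[/eqP->|yz]; first by rewrite eqxx.
  apply/orP; right; rewrite ltr_tan // in_itv /= ?hy ?hz.
have t0 : 0 <= tan B by rewrite -tan0; apply: mono; rl.
have u1 : tan x <= tan B by apply: mono; rl.
have u2 : tan (- B) <= tan x by apply: mono; rl.
rewrite tanN in u2.
nra.
Qed.

Lemma GG_grow (R : realType) (v B x y : R) : 0 < v < 1 / 2 ->
  0 <= B <= aa v -> - B <= x -> x <= y -> y <= B ->
  ff v (tan (B / 2)) * (y - x) <= GG v y - GG v x.
Proof.
move=> h hB hx xy hy; have := aa_range h; have hp := @pi_gt0 R => ha.
have d1 : forall z, z \in `]x, y[%R -> is_derive z 1 (GG v)
    (cc v * (1 + tan (z / 2) ^+ 2) / (1 + (cc v * tan (z / 2)) ^+ 2)).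
  move=> z; rewrite in_itv /= => /andP[z1 z2]; apply: GG_derive; rl.
have d2 : {within `[x, y], continuous (GG v)}.
  apply: continuous_in_subspaceT => z; rewrite inE /= in_itv /= => /andP[z1 z2].
  apply: GG_cont; rl.
have [z zin ->] := MVT_segment xy d1 d2.
rewrite in_itv /= in zin; case/andP: zin => z1 z2.
rewrite ler_wpM2r ?subr_ge0 //.
apply: ff_mono => //; apply: tan_sq_le; rl.
Qed.

Lemma ff_gt1 (R : realType) (v T : R) : 0 < v < 1 / 2 ->
  T ^+ 2 < (1 - v) / (1 + v) -> 1 < ff v T.
Proof.
move=> h hT; rewrite /ff /cc.
have p1 : 0 < 1 + ((1 + v) / (1 - v) * T) ^+ 2 by apply: ltr_pwDl => //; exact: sqr_ge0.
rewrite ltr_pdivlMr // mul1r.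
rewrite ltr_pdivlMr in hT; last lra.
have e : ((1 + v) / (1 - v) * T) ^+ 2 = (1 + v) ^+ 2 / (1 - v) ^+ 2 * T ^+ 2.
  by rewrite exprMn expr_div_n.
rewrite e -subr_gt0.
have -> : (1 + v) / (1 - v) * (1 + T ^+ 2) - (1 + (1 + v) ^+ 2 / (1 - v) ^+ 2 * T ^+ 2)
  = 2 * v / (1 - v) ^+ 2 * ((1 - v) - T ^+ 2 * (1 + v)).
  by field; apply: lt0r_neq0; lra.
apply: mulr_gt0; last lra.
apply: divr_gt0; first lra.
apply: exprn_gt0; lra.
Qed.

Lemma ff_aa (R : realType) (v : R) : 0 < v < 1 / 2 -> ff v (tan (aa v / 2)) = 1.
Proof.
move=> h; rewrite /ff [(cc v * _) ^+ 2]exprMn (tan_aa2 h) /cc.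
by field; nz.
Qed.

Definition mm (R : realType) (v : R) : R := (aa v - pi / 3) / 4.
Definition lam (R : realType) (v : R) : R := ff v (tan ((aa v - mm v) / 2)).

Lemma lam_gt1 (R : realType) (v : R) : 0 < v < 1 / 2 -> 1 < lam v.
Proof.
move=> h; have := aa_range h; have hp := @pi_gt0 R => ha.
apply: ff_gt1 => //; rewrite -tan_aa2 //.
have mono : forall y z : R, 0 <= y -> y < z -> z < pi / 2 -> 0 <= tan y < tan z.
  move=> y z y0 yz zp; apply/andP; split.
    rewrite -tan0; have [->|y1] := eqVneq y 0; first by rewrite lexx.
    by apply/ltW; rewrite ltr_tan ?in_itv /=; rl.
  by rewrite ltr_tan ?in_itv /=; rl.
have : 0 <= tan ((aa v - mm v) / 2) < tan (aa v / 2).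
  by apply: mono; rewrite /mm; lra.
case/andP=> t0 t1; nra.
Qed.

Definition hK (R : realType) (v th : R) : R := pi - GG v th.

Definition xc (R : realType) (a : nat) (p : R * R) : R :=
  match a with 1%N => p.1 | 2%N => - (p.1 + Num.sqrt 3 * p.2) / 2
  | _ => - (p.1 - Num.sqrt 3 * p.2) / 2 end.

Definition Cen (R : realType) (a : nat) : R :=
  match a with 1%N => 0 | 2%N => - (2 * pi / 3) | _ => 2 * pi / 3 end.

Lemma Aidx_E (R : realType) (v : R) a p : (1 <= a <= 3)%N ->
  Aidx v a p <-> Kcircle p /\ v <= xc a p.
Proof. by case: a => [|[|[|[|]]]]. Qed.

Lemma circ_cis (R : realType) (th : R) : Kcircle (cis th).
Proof. exact: cos2Dsin2. Qed.

Lemma xc_cis (R : realType) a (th : R) : (1 <= a <= 3)%N ->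
  xc a (cis th) = cos (th - Cen R a).
Proof.
case: a => [|[|[|[|]]]] //= _; rewrite ?subr0 //.
- by rewrite opprK cosD cos_2pi3 sin_2pi3; field.
- by rewrite cosB cos_2pi3 sin_2pi3; field.
Qed.

Lemma cis_per (R : realType) (th : R) : cis (th + 2 * pi) = cis th.
Proof.
rewrite /cis; have -> : 2 * pi = pi *+ 2 :> R by rewrite mulr2n; ring.
by rewrite cosD2pi sinD2pi.
Qed.

Lemma cis_perN (R : realType) (th : R) : cis (th - 2 * pi) = cis th.
Proof. by rewrite -[in RHS](subrK (2 * pi) th) cis_per. Qed.

Lemma K1_cis (R : realType) (v th : R) : - (pi / 2) < th < pi / 2 ->
  K1 v (cis th) = cis (hK v th).
Proof.
move=> h; rewrite /K1 /phiA1 /cis /=.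
have -> : atan (sin th / cos th) = th by apply: tanK; rewrite in_itv /=.
by [].
Qed.

Lemma Kidx_cis (R : realType) (v th : R) a : (1 <= a <= 3)%N ->
  - (pi / 2) < th - Cen R a < pi / 2 ->
  Kidx v a (cis th) = cis (hK v (th - Cen R a) + Cen R a).
Proof.
case: a => [|[|[|[|]]]] //= _ h.
- by rewrite subr0 addr0 in h *; exact: K1_cis.
- rewrite /K2 /rho /rhoinv cis_rot K1_cis; last by rewrite opprK in h.
  by rewrite cis_rot opprK.
- by rewrite /K3 /rho /rhoinv cis_rot K1_cis // cis_rot.
Qed.

Lemma no_triple (R : realType) (v : R) p : 0 < v ->
  ~ (A1 v p /\ A2 v p /\ A3 v p).
Proof. by move=> v0 [[_ h1] [[_ h2] [_ h3]]]; lra. Qed.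

Definition br (a : nat) : nat * nat * nat :=
  match a with 1%N => (1, 2, 1)%N | 2%N => (2, 2, 1)%N | _ => (1, 3, 3)%N end.

Lemma br_sigma a : let t := br a in
  (t.1.1 = 1 \/ t.1.1 = 2)%N /\ (t.1.2 = 2 \/ t.1.2 = 3)%N /\ (t.2 = 1 \/ t.2 = 3)%N.
Proof. by case: a => [|[|[|]]] /=; auto. Qed.

Lemma Kmix_br (R : realType) (v : R) a p : 0 < v -> (1 <= a <= 3)%N ->
  Aidx v a p -> Kmix v (br a) p = Kidx v a p.
Proof.
move=> v0; rewrite /Kmix.
case: a => [|[|[|[|]]]] //= _ hA.
- case: ifPn => // /negP h12; case: ifPn => [/set_mem [h2 h3]|_].
    by case: (no_triple v0 (conj hA (conj h2 h3))).
  by case: ifPn => // _; rewrite ifT //; exact: mem_set.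
- case: ifPn => // /negP n12; case: ifPn => // _; case: ifPn => [/set_mem [h1 h3]|_].
    by case: (no_triple v0 (conj h1 (conj hA h3))).
  case: ifPn => [/set_mem h1|_]; last by rewrite ifT //; exact: mem_set.
  by case: n12; apply: mem_set.
- case: ifPn => [/set_mem [h1 h2]|_].
    by case: (no_triple v0 (conj h1 (conj h2 hA))).
  case: ifPn => // /negP n23; case: ifPn => // /negP n13.
  case: ifPn => [/set_mem h1|_]; first by case: n13; apply: mem_set.
  case: ifPn => [/set_mem h2|_]; first by case: n23; apply: mem_set.
  by rewrite ifT //; exact: mem_set.
Qed.

Lemma Kmix_single (R : realType) (v : R) t a p : (1 <= a <= 3)%N ->
  Aidx v a p -> ~ Abold v p -> Kmix v t p = Kidx v a p.
Proof.
move=> + hA hB; rewrite /Kmix.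
have n12 : (p \in A1 v `&` A2 v) = false.
  by apply/negP => /set_mem h; apply: hB; left; left.
have n23 : (p \in A2 v `&` A3 v) = false.
  by apply/negP => /set_mem h; apply: hB; left; right.
have n13 : (p \in A1 v `&` A3 v) = false.
  by apply/negP => /set_mem h; apply: hB; right.
rewrite n12 n23 n13.
case: a hA => [|[|[|[|]]]] //= hA _.
- by rewrite ifT //; exact: mem_set.
- case: ifPn => [/set_mem h1|_].
    by have := @mem_set _ (A1 v `&` A2 v) p (conj h1 hA); rewrite n12.
  by rewrite ifT //; exact: mem_set.
- case: ifPn => [/set_mem h1|_].
    by have := @mem_set _ (A1 v `&` A3 v) p (conj h1 hA); rewrite n13.
  case: ifPn => [/set_mem h2|_].
    by have := @mem_set _ (A2 v `&` A3 v) p (conj h2 hA); rewrite n23.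
  by rewrite ifT //; exact: mem_set.
Qed.

Lemma Kidx_circ (R : realType) (v : R) a p : Kcircle (Kidx v a p).
Proof.
have k1 : forall q, exists th, K1 v q = cis th by move=> q; eexists.
case: a => [|[|[|]]] /=; rewrite ?/K2 ?/K3 ?/rho ?/rhoinv.
- by have [th ->] := k1 (Defs.rot (- (2 * pi / 3)) p); rewrite cis_rot; exact: circ_cis.
- by have [th ->] := k1 p; exact: circ_cis.
- by have [th ->] := k1 (Defs.rot (2 * pi / 3) p); rewrite cis_rot; exact: circ_cis.
- by move=> _; have [th ->] := k1 (Defs.rot (- (2 * pi / 3)) p); rewrite cis_rot; exact: circ_cis.
Qed.

Lemma Kmix_circ (R : realType) (v : R) t p : Kcircle p -> Kcircle (Kmix v t p).
Proof.
move=> hp; rewrite /Kmix.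
repeat case: ifP => _; first [exact: hp | exact: (Kidx_circ v 1 p) |
  exact: (Kidx_circ v 2 p) | exact: (Kidx_circ v 3 p) | exact: Kidx_circ].
Qed.

Lemma cis_pern (R : realType) (th : R) n : cis (th + 2 * pi * n%:R) = cis th.
Proof.
elim: n => [|n IH]; first by rewrite mulr0 addr0.
by rewrite -[n.+1]addn1 natrD mulrDr mulr1 addrA cis_per.
Qed.

Lemma cis_perz (R : realType) (th : R) (k : int) : cis (th + 2 * pi * k%:~R) = cis th.
Proof.
case: k => n; first by rewrite -pmulrn cis_pern.
rewrite NegzE mulrNz mulrN -[in RHS](subrK (2 * pi * (n.+1)%:R) th).
by rewrite -pmulrn cis_pern.
Qed.

Lemma normalize (R : realType) (a x : R) : exists k : int,
  - a <= x - 2 * pi * k%:~R < 2 * pi - a.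
Proof.
have hp := @pi_gt0 R.
exists (Num.floor ((x + a) / (2 * pi))).
have := floor_le ((x + a) / (2 * pi)); have := floorD1_gt ((x + a) / (2 * pi)).
set k := Num.floor _; rewrite intrD => h1 h2.
rewrite ler_pdivlMr in h2; last lra.
rewrite ltr_pdivrMr in h1; last lra.
rl.
Qed.

Lemma angle_exists (R : realType) (q : R * R) : Kcircle q ->
  exists2 th : R, - pi <= th <= pi & q = cis th.
Proof.
case: q => q1 q2; rewrite /Kcircle /= => hq.
have hq1 : -1 <= q1 <= 1.
  have : q1 ^+ 2 <= 1 by have := sqr_ge0 q2; lra.
  by move=> h; apply/andP; split; nra.
have hc : cos (acos q1) = q1 by rewrite acosK // in_itv.
have hs : sin (acos q1) = `|q2|.
  rewrite sin_acos // (_ : 1 - q1 ^+ 2 = q2 ^+ 2); last lra.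
  by rewrite sqrtr_sqr.
have r0 := acos_ge0 hq1; have r1 := acos_lepi hq1.
case: (lerP 0 q2) => h2.
- exists (acos q1); first rl.
  by rewrite /cis hc hs ger0_norm.
- exists (- acos q1); first rl.
  by rewrite /cis cosN sinN hc hs ltr0_norm // opprK.
Qed.

Lemma rot_inv (R : realType) (t : R) p : Defs.rot t (Defs.rot (- t) p) = p.
Proof.
case: p => p1 p2; rewrite /Defs.rot /= cosN sinN.
have h := cos2Dsin2 t.
congr pair.
- transitivity (p1 * (cos t ^+ 2 + sin t ^+ 2)); first ring.
  by rewrite h mulr1.
- transitivity (p2 * (cos t ^+ 2 + sin t ^+ 2)); first ring.
  by rewrite h mulr1.
Qed.

Lemma rot_circ (R : realType) (t : R) p : Kcircle p -> Kcircle (Defs.rot t p).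
Proof.
case: p => p1 p2; rewrite /Kcircle /Defs.rot /= => h.
have h2 := cos2Dsin2 t.
transitivity ((p1 ^+ 2 + p2 ^+ 2) * (cos t ^+ 2 + sin t ^+ 2)); first ring.
by rewrite h h2 mulr1.
Qed.

Lemma angle_window (R : realType) (w : R) (q : R * R) : Kcircle q ->
  exists2 th : R, w - pi <= th <= w + pi & q = cis th.
Proof.
move=> hq; have [phi hphi e] := angle_exists (rot_circ (- w) hq).
exists (phi + w); first by move: hphi; rl.
by rewrite -cis_rot -e rot_inv.
Qed.

Lemma cos_ge_iff (R : realType) (v u : R) : 0 < v < 1 / 2 ->
  - pi <= u <= pi -> (v <= cos u) <-> (- aa v <= u <= aa v).
Proof.
move=> h hu; have := aa_range h; have hp := @pi_gt0 R => ha.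
rewrite -cos_norm -{1}(aa_cos h) cos_le_mono; first last.
- by rewrite normr_ge0 /=; move: hu; rewrite -ler_norml.
- rl.
by rewrite ler_norml.
Qed.

Definition okC (R : realType) (a : nat) (C : R) :=
  (1 <= a <= 3)%N /\ (C = Cen R a \/ C = Cen R a + 2 * pi).

Lemma cos_okC (R : realType) a (C th : R) : okC a C ->
  cos (th - Cen R a) = cos (th - C).
Proof.
case=> _ [->|->] //.
have := cosD2pi (th - (Cen R a + 2 * pi)).
by rewrite (_ : th - (Cen R a + 2 * pi) + pi *+ 2 = th - Cen R a) // mulr2n; ring.
Qed.

Lemma A_of_angle (R : realType) (v : R) a C th : 0 < v < 1 / 2 -> okC a C ->
  C - aa v <= th <= C + aa v -> Aidx v a (cis th).
Proof.
move=> h hC hth; have := aa_range h; have hp := @pi_gt0 R => ha.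
case: (hC) => ha3 _.
apply/Aidx_E => //; split; first exact: circ_cis.
rewrite xc_cis // (cos_okC _ hC); apply/cos_ge_iff => //; rl.
Qed.

Lemma angle_of_A (R : realType) (v : R) a C th : 0 < v < 1 / 2 -> okC a C ->
  - pi <= th - C <= pi -> Aidx v a (cis th) -> C - aa v <= th <= C + aa v.
Proof.
move=> h hC hth; case: (hC) => ha3 _.
move/(Aidx_E _ _ ha3) => [_]; rewrite xc_cis // (cos_okC _ hC).
by move/(cos_ge_iff h hth) => /andP[h1 h2]; rl.
Qed.

Lemma Kidx_gen (R : realType) (v : R) a C th : okC a C ->
  - (pi / 2) < th - C < pi / 2 ->
  Kidx v a (cis th) = cis (hK v (th - C) + C).
Proof.
case=> ha [->|->] h; first exact: Kidx_cis.
rewrite -cis_perN Kidx_cis //; last first.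
  by rewrite (_ : th - 2 * pi - Cen R a = th - (Cen R a + 2 * pi)) //; ring.
rewrite (_ : th - 2 * pi - Cen R a = th - (Cen R a + 2 * pi)); last ring.
by rewrite -[in RHS]cis_perN; congr cis; ring.
Qed.

Definition ss (R : realType) : R := 2 * pi / 3.
Definition ee (R : realType) (v : R) : R := aa v - pi / 3.
Definition tt (R : realType) (v : R) (j : nat) : R := - aa v + j%:R * ss R.

Definition mainA (j : nat) : nat :=
  match j with 0%N => 1%N | 1%N => 3%N | 2%N => 2%N | _ => 1%N end.
Definition prevA (j : nat) : nat :=
  match j with 0%N => 2%N | 1%N => 1%N | 2%N => 3%N | _ => 2%N end.

Lemma okC_main (R : realType) j : (j <= 3)%N -> okC (mainA j) (j%:R * ss R).
Proof.
rewrite /okC /ss; case: j => [|[|[|[|]]]] //= _; split => //.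
- by left; rewrite mul0r.
- by left; rewrite mul1r.
- by right; rewrite /Cen; field.
- by right; rewrite /Cen; field.
Qed.

Lemma okC_prev (R : realType) j : (j <= 3)%N -> okC (prevA j) ((j%:R - 1) * ss R).
Proof.
rewrite /okC /ss; case: j => [|[|[|[|]]]] //= _; split => //.
- by left; rewrite /Cen; field.
- by left; rewrite subrr mul0r.
- by left; rewrite /Cen; field.
- by right; rewrite /Cen; field.
Qed.

Lemma overlap_A (R : realType) (v : R) j th : 0 < v < 1 / 2 -> (j <= 3)%N ->
  tt v j <= th <= tt v j + 2 * ee v ->
  Aidx v (prevA j) (cis th) /\ Aidx v (mainA j) (cis th).
Proof.
move=> h hj hth; have := aa_range h; have hp := @pi_gt0 R => ha.
move: hth; rewrite /tt /ee /ss => hth.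
split.
- apply: (A_of_angle h (okC_prev R hj)); rewrite /ss; move: hth.
  have : (j%:R - 1) * (2 * pi / 3) = j%:R * (2 * pi / 3) - 2 * pi / 3 :> R by ring.
  move=> ->; rl.
- apply: (A_of_angle h (okC_main R hj)); rewrite /ss; rl.
Qed.

Lemma overlap_bold (R : realType) (v : R) j th : 0 < v < 1 / 2 -> (j <= 3)%N ->
  tt v j <= th <= tt v j + 2 * ee v -> Abold v (cis th).
Proof.
move=> h hj hth; have [h1 h2] := overlap_A h hj hth.
move: h1 h2; case: j hj {hth} => [|[|[|[|]]]] //= _ h1 h2.
- by left; left.
- by right.
- by left; right.
- by left; left.
Qed.

Lemma tt_facts (R : realType) (v : R) j :
  [/\ tt v j.+1 = tt v j + ss R, j%:R * ss R = tt v j + aa v &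
      (j%:R - 1) * ss R = tt v j + aa v - ss R].
Proof. by rewrite /tt -addn1 natrD; split; ring. Qed.

Lemma seg_exists (R : realType) (v x : R) : tt v 0 <= x < tt v 3 ->
  exists2 j, (j <= 2)%N & tt v j <= x < tt v j.+1.
Proof.
move=> /andP[h1 h2].
case: (ltP x (tt v 1)) => c1; first by exists 0%N => //; rl.
case: (ltP x (tt v 2)) => c2; first by exists 1%N => //; rl.
by exists 2%N => //; rl.
Qed.

Lemma basic_ineq (R : realType) (v : R) : 0 < v < 1 / 2 ->
  [/\ 0 < ee v, mm v = ee v / 4, ss R = 2 * aa v - 2 * ee v, 0 < aa v < pi / 2 &
      ee v = aa v - pi / 3].
Proof.
move=> h; have := aa_range h; have hp := @pi_gt0 R => /andP[h1 h2].
by rewrite /ee /mm /ss; split => //; try lra; rl.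
Qed.

Lemma classify_i (R : realType) (v x y : R) : 0 < v < 1 / 2 ->
  tt v 0 <= x -> x <= y -> x < tt v 3 ->
  (forall th, x <= th <= y -> ~ Abold v (cis th)) ->
  exists a, exists C : R, okC a C /\ C - aa v + mm v <= x /\ y <= C + aa v - mm v.
Proof.
move=> h h0 xy h3 hno.
have [j hj /andP[j1 j2]] : exists2 j, (j <= 2)%N & tt v j <= x < tt v j.+1.
  by apply: seg_exists; rl.
have [e1 e2 e3] := tt_facts v j.
have [b1 b2 b3 /andP[b4 b5] b6] := basic_ineq h.
have hj3 : (j <= 3)%N by apply: leq_trans hj _.
exists (mainA j), (j%:R * ss R); split; first exact: (okC_main R hj3).
rewrite e2; split.
- case: (ltP x (tt v j + 2 * ee v)) => c; last lra.
  by case: (hno x); [rl | apply: (overlap_bold h hj3); rl].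
- case: (ltP y (tt v j.+1)) => c; first lra.
  case: (hno (tt v j.+1)); first rl.
  by apply: (overlap_bold (j := j.+1) h hj); rl.
Qed.

Lemma classify_ii (R : realType) (v x y : R) : 0 < v < 1 / 2 ->
  tt v 0 <= x -> x <= y -> x < tt v 3 ->
  (exists2 j, (1 <= j <= 3)%N & x <= tt v j /\ tt v j + 2 * ee v <= y) \/
  (exists a, exists C : R, exists x2, exists y2, okC a C /\ C - aa v <= x /\ y <= C + aa v /\
     x <= x2 /\ x2 <= y2 /\ y2 <= y /\ C - aa v + mm v <= x2 /\ y2 <= C + aa v - mm v /\
     (y - x <= y2 - x2 \/ 3 * ee v / 4 <= y2 - x2)).
Proof.
move=> h h0 xy h3.
have [j hj /andP[j1 j2]] : exists2 j, (j <= 2)%N & tt v j <= x < tt v j.+1.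
  by apply: seg_exists; rl.
have [e1 e2 e3] := tt_facts v j.
have [b1 b2 b3 /andP[b4 b5] b6] := basic_ineq h.
have hj3 : (j <= 3)%N by apply: leq_trans hj _.
case: (lerP (tt v j.+1 + 2 * ee v) y) => cy.
  by left; exists j.+1; [exact: hj | lra].
right.
case: (lerP x (tt v j + ee v)) => cx.
- case: (lerP y (tt v j + 2 * ee v - mm v)) => cy2.
  + exists (prevA j), ((j%:R - 1) * ss R), x, y.
    split; first exact: (okC_prev R hj3). rewrite e3.
    by do 7 (split; first lra); left; lra.
  + exists (mainA j), (j%:R * ss R), (tt v j + ee v), (tt v j + 2 * ee v - mm v).
    split; first exact: (okC_main R hj3). rewrite e2.
    by do 7 (split; first lra); right; lra.
- case: (lerP y (tt v j + 2 * aa v - mm v)) => cy2.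
  + exists (mainA j), (j%:R * ss R), x, y.
    split; first exact: (okC_main R hj3). rewrite e2.
    by do 7 (split; first lra); left; lra.
  + exists (mainA j), (j%:R * ss R), x, (tt v j + 2 * aa v - mm v).
    split; first exact: (okC_main R hj3). rewrite e2.
    by do 7 (split; first lra); right; lra.
Qed.

Lemma cos_perN (R : realType) (u : R) : cos (u - 2 * pi) = cos u.
Proof.
have := cosD2pi (u - 2 * pi).
by rewrite (_ : u - 2 * pi + pi *+ 2 = u) // mulr2n; ring.
Qed.

Lemma overlap_cover (R : realType) (v : R) j p : 0 < v < 1 / 2 -> (1 <= j <= 3)%N ->
  Aidx v (prevA j) p -> Aidx v (mainA j) p ->
  exists2 th, tt v j <= th <= tt v j + 2 * ee v & p = cis th.
Proof.
move=> h /andP[hj1 hj3] hp hm.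
have [e1 e2 e3] := tt_facts v j.
have [b1 b2 b3 /andP[b4 b5] b6] := basic_ineq h.
have hpi := @pi_gt0 R.
have oP := okC_prev R hj3; have oM := okC_main R hj3.
have hc : Kcircle p by case: oM => hh _; case/(Aidx_E _ _ hh): hm.
have [th hth ep] := angle_window (j%:R * ss R) hc.
exists th => //; rewrite ep in hp hm.
rewrite e2 in hth.
have hM : j%:R * ss R - aa v <= th <= j%:R * ss R + aa v.
  by apply: (angle_of_A h oM) => //; rewrite e2; rl.
rewrite e2 in hM.
case: (oP) => hh _.
case/(Aidx_E _ _ hh): hp => _; rewrite xc_cis // (cos_okC _ oP) e3 => hcos.
case: (lerP (th - (tt v j + aa v - ss R)) pi) => c.
+ have := (cos_ge_iff (u := th - (tt v j + aa v - ss R)) h).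
  case=> [|/(_ hcos) hh2 _]; first rl.
  rl.
+ rewrite -cos_perN in hcos.
  have := (cos_ge_iff (u := th - (tt v j + aa v - ss R) - 2 * pi) h).
  case=> [|/(_ hcos) hh2 _]; first rl.
  rl.
Qed.

Lemma GG_mono1 (R : realType) (v x y : R) : 0 < v < 1 / 2 ->
  - aa v <= x -> x <= y -> y <= aa v -> y - x <= GG v y - GG v x.
Proof.
move=> h hx xy hy; have [b1 b2 b3 /andP[b4 b5] b6] := basic_ineq h.
have := GG_grow (B := aa v) h _ hx xy hy; rewrite ff_aa // mul1r; apply; rl.
Qed.

Lemma GG_grow3 (R : realType) (v x x2 y2 y : R) : 0 < v < 1 / 2 ->
  - aa v <= x -> x <= x2 -> x2 <= y2 -> y2 <= y -> y <= aa v ->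
  - (aa v - mm v) <= x2 -> y2 <= aa v - mm v ->
  (y - x) + (lam v - 1) * (y2 - x2) <= GG v y - GG v x.
Proof.
move=> h hx h1 h2 h3 hy d1 d2; have [b1 b2 b3 /andP[b4 b5] b6] := basic_ineq h.
have g1 := GG_mono1 h hx h1 (ltac:(lra) : x2 <= aa v).
have g3 := GG_mono1 h (ltac:(lra) : - aa v <= y2) h3 hy.
have g2 := GG_grow (B := aa v - mm v) h (ltac:(rl)) d1 h2 d2.
rewrite -/(lam v) in g2.
lra.
Qed.

Definition fC (R : realType) (v C th : R) : R := hK v (th - C) + C.

Lemma fC_cont (R : realType) (v C th : R) : - pi < th - C < pi ->
  {for th, continuous (fC v C)}.
Proof.
move=> h; rewrite /fC /hK.
apply: continuousD; last exact: cvg_cst.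
apply: continuousB; first exact: cvg_cst.
apply: (@continuous_comp _ _ _ (fun t => t - C) (GG v)).
  by apply: continuousB; [exact: cvg_id | exact: cvg_cst].
exact: GG_cont.
Qed.

Lemma branch_ivt (R : realType) (v : R) a C x y t : 0 < v < 1 / 2 -> okC a C ->
  C - aa v <= x -> x <= y -> y <= C + aa v ->
  fC v C y <= t <= fC v C x ->
  exists2 th, x <= th <= y & Kidx v a (cis th) = cis t.
Proof.
move=> h hC hx xy hy ht; have [b1 b2 b3 /andP[b4 b5] b6] := basic_ineq h.
have hpi := @pi_gt0 R.
have fc : {within `[x, y], continuous (fC v C)}.
  apply: continuous_in_subspaceT => z; rewrite inE /= in_itv /= => /andP[z1 z2].
  apply: fC_cont; rl.
have side : Num.min (fC v C x) (fC v C y) <= t <= Num.max (fC v C x) (fC v C y).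
  apply/andP; split.
  - by rewrite ge_min; apply/orP; right; case/andP: ht.
  - by rewrite le_max; apply/orP; left; case/andP: ht.
have [z zin fz] := IVT xy fc side.
rewrite in_itv /= in zin.
exists z => //; rewrite (Kidx_gen _ hC); first by rewrite -fz.
case/andP: zin => z1 z2; rl.
Qed.

Lemma cis_cont (R : realType) (th : R) : cis @ th --> cis th.
Proof. by apply: (@cvg_pair _ _ _ _ (nbhs (cos th)) (nbhs (sin th))); [exact: continuous_cos | exact: continuous_sin]. Qed.

Lemma U_arc (R : realType) (U : set (R * R)) :
  (exists2 V : set (R * R), open V & U = V `&` Kcircle) -> U !=set0 ->
  exists x, exists y, x < y /\ forall th, x <= th <= y -> U (cis th).
Proof.
move=> [V oV eU] [p Up].
have [Vp hc] : V p /\ Kcircle p by rewrite eU in Up.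
have [th0 _ ep] := angle_exists hc.
have nV : nbhs p V by apply: open_nbhs_nbhs; split.
rewrite ep in nV.
have := cis_cont nV; move/nbhs_ballP => [e e0 he].
have e1 : 0 < e := e0.
exists (th0 - e / 2), (th0 + e / 2); split; first lra.
move=> th hth; rewrite eU; split; last exact: circ_cis.
apply: he; rewrite /ball /= ltr_norml; rl.
Qed.

Lemma tt0 (R : realType) (v : R) : tt v 0 = - aa v.
Proof. by rewrite /tt mul0r addr0. Qed.

Lemma tt3 (R : realType) (v : R) : tt v 3 = - aa v + 2 * pi.
Proof. by rewrite /tt /ss; field. Qed.

Lemma step_ii (R : realType) (v x y : R) (S : set (R * R)) : 0 < v < 1 / 2 ->
  x <= y -> (forall th, x <= th <= y -> S (cis th)) ->
  (exists j, (1 <= j <= 3)%N /\ Aidx v (prevA j) `&` Aidx v (mainA j) `<=` S) \/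
  (y - x <= 2 * aa v /\ exists a, (1 <= a <= 3)%N /\ exists x', exists y', x' <= y' /\
     (forall th, x' <= th <= y' -> (Kmix v (br a) @` S) (cis th)) /\
     (y - x) + (lam v - 1) * Num.min (y - x) (3 * ee v / 4) <= y' - x').
Proof.
move=> h xy hS; have [b1 b2 b3 /andP[b4 b5] b6] := basic_ineq h.
have hpi := @pi_gt0 R; have hl := lam_gt1 h.
have [k /andP[k1 k2]] := normalize (aa v) x.
set X := x - 2 * pi * k%:~R in k1 k2; set Y := y - 2 * pi * k%:~R.
have hS' : forall th, X <= th <= Y -> S (cis th).
  move=> th hth; rewrite -(cis_perz th k); apply: hS.
  by move: hth; rewrite /X /Y; rl.
have XY : X <= Y by rewrite /X /Y; lra.
have eYX : Y - X = y - x by rewrite /X /Y; ring.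
have [[j hj [j1 j2]]|[a [C [x2 [y2 [hC [c1 [c2 [c3 [c4 [c5 [c6 [c7 c8]]]]]]]]]]]]] :=
  classify_ii h (ltac:(rewrite tt0; lra) : tt v 0 <= X) XY (ltac:(rewrite tt3; lra) : X < tt v 3).
- left; exists j; split => // p [hp hm].
  have [th hth ->] := overlap_cover h hj hp hm.
  by apply: hS'; move: hth; rl.
- right; split; first lra.
  case: (hC) => ha _.
  exists a; split => //.
  exists (fC v C Y), (fC v C X).
  have g := GG_grow3 (x := X - C) (x2 := x2 - C) (y2 := y2 - C) (y := Y - C) h
    (ltac:(lra)) (ltac:(lra)) (ltac:(lra)) (ltac:(lra)) (ltac:(lra)) (ltac:(lra)) (ltac:(lra)).
  rewrite (_ : y2 - C - (x2 - C) = y2 - x2) in g; last ring.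
  have gp : 0 <= (lam v - 1) * (y2 - x2) by apply: mulr_ge0; lra.
  have eF : fC v C X - fC v C Y = GG v (Y - C) - GG v (X - C) by rewrite /fC /hK; ring.
  split; first lra.
  split.
  + move=> t ht.
    have [th hth ek] := branch_ivt h hC c1 XY c2 ht.
    exists (cis th); first by apply: hS'.
    rewrite Kmix_br //; first lra.
    by apply: (A_of_angle h hC); move: hth; rl.
  + rewrite eF -eYX.
    have : (lam v - 1) * Num.min (Y - X) (3 * ee v / 4) <= (lam v - 1) * (y2 - x2).
      apply: ler_wpM2l; first lra.
      by case: c8 => c8; rewrite ge_min; apply/orP; [left|right]; lra.
    lra.
Qed.

Lemma Kiter_ext (R : realType) (v : R) om om' n :
  (forall k, (k < n)%N -> om k = om' k) -> Kiter v om n =1 Kiter v om' n.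
Proof.
elim: n => [|n IH] hk p //=.
rewrite hk // IH // => k kn; apply: hk; exact: ltnW.
Qed.

Lemma Kiter_img (R : realType) (v : R) om n (U : set (R * R)) :
  Kiter v om n.+1 @` U = Kmix v (om n) @` (Kiter v om n @` U).
Proof. by rewrite -image_comp. Qed.

Definition upd (om : nat -> nat * nat * nat) n t : nat -> nat * nat * nat :=
  fun k => if k == n then t else om k.

Lemma inSigma_upd om n a : inSigma om -> inSigma (upd om n (br a)).
Proof. by move=> h k; rewrite /upd; case: eqP => _; [exact: br_sigma | exact: h]. Qed.

Lemma part_ii (R : realType) (v : R) (U : set (R * R)) : 0 < v < 1 / 2 ->
  (exists2 V : set (R * R), @open (R * R)%type V & U = V `&` Kcircle) -> U !=set0 ->
  (exists omega, exists M : nat, exists a b : nat,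
     inSigma omega /\ (1 <= a <= 3)%N /\ (1 <= b <= 3)%N /\ a <> b /\
     Aidx v a `&` Aidx v b `<=` Kiter v omega M @` U).
Proof.
move=> h hU hne.
have [b1 b2 b3 /andP[b4 b5] b6] := basic_ineq h.
have hpi := @pi_gt0 R; have hl := lam_gt1 h.
have [x0 [y0 [xy0 hU0]]] := U_arc hU hne.
set L0 := y0 - x0.
set dl := (lam v - 1) * Num.min L0 (3 * ee v / 4).
have dl0 : 0 < dl.
  apply: mulr_gt0; first lra.
  by rewrite lt_min; apply/andP; split; rewrite /L0; lra.
set G := exists omega, exists M : nat, exists a b : nat,
     inSigma omega /\ (1 <= a <= 3)%N /\ (1 <= b <= 3)%N /\ a <> b /\
     Aidx v a `&` Aidx v b `<=` Kiter v omega M @` U.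
have fin : forall om n (x y : R), inSigma om -> x <= y ->
    (forall th, x <= th <= y -> (Kiter v om n @` U) (cis th)) ->
    G \/ (y - x <= 2 * aa v /\ exists om', inSigma om' /\ exists x', exists y', x' <= y' /\
      (forall th, x' <= th <= y' -> (Kiter v om' n.+1 @` U) (cis th)) /\
      (y - x) + (lam v - 1) * Num.min (y - x) (3 * ee v / 4) <= y' - x').
  move=> om n x y hom xy hS.
  case: (step_ii h xy hS) => [[j [hj hsub]]|[hlen [a [ha [x' [y' [xy' [hS' hg]]]]]]]].
  - left; exists om, n, (prevA j), (mainA j); split => //.
    by case: j hj hsub => [|[|[|[|]]]] //= _ hsub; do 3 (split => //).
  - right; split => //; exists (upd om n (br a)); split; first exact: inSigma_upd.
    exists x', y'; split => //; split => // th hth.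
    rewrite Kiter_img (_ : upd om n (br a) n = br a); last by rewrite /upd eqxx.
    rewrite (_ : Kiter v (upd om n (br a)) n @` U = Kiter v om n @` U); first exact: hS'.
    apply: eq_imagel => p _; apply: Kiter_ext => k kn.
    by rewrite /upd ifN // neq_ltn kn.
have ind : forall n, G \/ exists om, inSigma om /\ exists x, exists y, x <= y /\
    (forall th, x <= th <= y -> (Kiter v om n @` U) (cis th)) /\ L0 + n%:R * dl <= y - x.
  elim=> [|n [IH|[om [hom [x [y [xy [hS hlen]]]]]]]]; [|by left|].
  - right; exists (fun _ => br 1); split; first by move=> k; exact: br_sigma.
    exists x0, y0; split; first lra; split; last by rewrite mul0r addr0.
    by move=> th hth; exists (cis th) => //; apply: hU0.
  - case: (fin om n x y hom xy hS) => [|[_ [om' [hom' [x' [y' [xy' [hS' hg]]]]]]]]; first by left.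
    right; exists om'; split => //; exists x', y'; split => //; split => //.
    have hmin : Num.min L0 (3 * ee v / 4) <= Num.min (y - x) (3 * ee v / 4).
      rewrite le_min !ge_min lexx orbT andbT; apply/orP; left.
      have : 0 <= n%:R * dl by apply: mulr_ge0 => //; lra.
      lra.
    have : dl <= (lam v - 1) * Num.min (y - x) (3 * ee v / 4).
      by rewrite /dl; apply: ler_wpM2l => //; lra.
    rewrite -[n.+1]addn1 natrD; move=> hh; lra.
pose n := (Num.truncn (pi / dl)).+1.
have hn : pi < n%:R * dl.
  by rewrite -ltr_pdivrMr //; exact: Num.Theory.truncnS_gt.
case: (ind n) => [//|[om [hom [x [y [xy [hS hlen]]]]]]].
case: (fin om n x y hom xy hS) => [//|[hl2 _]].
have : 0 < L0 by rewrite /L0; lra.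
lra.
Qed.

Lemma fst_cont (R : realType) (p : R * R) : fst @ p --> p.1.
Proof. exact: cvg_fst. Qed.

Lemma snd_cont (R : realType) (p : R * R) : snd @ p --> p.2.
Proof. exact: cvg_snd. Qed.

Lemma rot_cont (R : realType) (t : R) (p : R * R) : Defs.rot t @ p --> Defs.rot t p.
Proof.
apply: (@cvg_pair _ _ _ _ (nbhs (Defs.rot t p).1) (nbhs (Defs.rot t p).2)).
- apply: cvgB; apply: cvgMl_tmp; [exact: fst_cont | exact: snd_cont].
- apply: cvgD; apply: cvgMl_tmp; [exact: fst_cont | exact: snd_cont].
Qed.

Lemma hK_cont (R : realType) (v t : R) : - pi < t < pi -> hK v @ t --> hK v t.
Proof.
move=> h; rewrite /hK; apply: cvgB; first exact: cvg_cst.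
exact: GG_cont.
Qed.

Lemma K1_cont (R : realType) (v : R) (p : R * R) : 0 < p.1 -> K1 v @ p --> K1 v p.
Proof.
move=> p1.
have e : K1 v = cis \o hK v \o atan \o (fun q : R * R => q.2 / q.1) by [].
rewrite e.
have hpi := @pi_gt0 R.
apply: continuous_comp.
  apply: cvgM; first exact: snd_cont.
  apply: cvgV; first by apply: lt0r_neq0.
  exact: fst_cont.
apply: continuous_comp; first exact: continuous_atan.
apply: continuous_comp; last exact: cis_cont.
apply: hK_cont; have := atan_gtNpi2 (p.2 / p.1); have := atan_ltpi2 (p.2 / p.1); rl.
Qed.

Lemma rho1 (R : realType) (p : R * R) : (rho p).1 = xc 2 p.
Proof. by rewrite /rho /Defs.rot /= cos_2pi3 sin_2pi3; field. Qed.

Lemma rhoinv1 (R : realType) (p : R * R) : (rhoinv p).1 = xc 3 p.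
Proof. by rewrite /rhoinv /Defs.rot /= cosN sinN cos_2pi3 sin_2pi3; field. Qed.

Lemma Kidx_cont (R : realType) (v : R) a (p : R * R) : 0 < v -> (1 <= a <= 3)%N ->
  Aidx v a p -> Kidx v a @ p --> Kidx v a p.
Proof.
move=> v0 ha /(Aidx_E _ _ ha) [_ hx].
case: a ha hx => [|[|[|[|]]]] //= _ hx.
- by apply: K1_cont; lra.
- have -> : K2 v = rhoinv \o (K1 v \o rho) by [].
  apply: continuous_comp; last exact: rot_cont.
  apply: continuous_comp; first exact: rot_cont.
  by apply: K1_cont; rewrite rho1 /=; lra.
- have -> : K3 v = rho \o (K1 v \o rhoinv) by [].
  apply: continuous_comp; last exact: rot_cont.
  apply: continuous_comp; first exact: rot_cont.
  by apply: K1_cont; rewrite rhoinv1 /=; lra.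
Qed.

Definition xca (R : realType) (a : nat) : R :=
  match a with 1%N => 1 | _ => - 1 / 2 end.
Definition xcb (R : realType) (a : nat) : R :=
  match a with 1%N => 0 | 2%N => - (Num.sqrt 3 / 2) | _ => Num.sqrt 3 / 2 end.

Lemma xc_lin (R : realType) a (q : R * R) : xc a q = xca R a * q.1 + xcb R a * q.2.
Proof. by case: a => [|[|[|]]] /= => [|||_]; field. Qed.

Lemma closed_H (R : realType) (v : R) a : closed [set q : R * R | v <= xc a q].
Proof.
have -> : [set q : R * R | v <= xc a q] = xc a @^-1` [set x | v <= x] by [].
apply: preimage_closed; last exact: closed_ge.
move=> q _.
have -> : xc a = fun q : R * R => xca R a * q.1 + xcb R a * q.2.
  by apply/funext => r; rewrite xc_lin.
apply: cvgD; apply: cvgMl_tmp; [exact: fst_cont | exact: snd_cont].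
Qed.

Lemma circle_cover (R : realType) (v : R) p : 0 < v < 1 / 2 -> Kcircle p ->
  exists2 a, (1 <= a <= 3)%N & Aidx v a p.
Proof.
move=> h hc.
case: (lerP v (xc 1 p)) => c1; first by exists 1%N => //; apply/Aidx_E.
case: (lerP v (xc 2 p)) => c2; first by exists 2%N => //; apply/Aidx_E.
case: (lerP v (xc 3 p)) => c3; first by exists 3%N => //; apply/Aidx_E.
exfalso; move: c1 c2 c3; rewrite /= ; move: hc; rewrite /Kcircle.
case: p => p1 p2 /= hc c1 c2 c3.
set y1 := 1 / 2 - p1; set y2 := 1 / 2 + (p1 + Num.sqrt 3 * p2) / 2.
set y3 := 1 / 2 + (p1 - Num.sqrt 3 * p2) / 2.
have q3 := sqrt3_sq R.
have s1 : y1 + y2 + y3 = 3 / 2 by rewrite /y1 /y2 /y3; field.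
have s2 : y1 ^+ 2 + y2 ^+ 2 + y3 ^+ 2 = 9 / 4.
  rewrite /y1 /y2 /y3.
  transitivity (3 / 4 + 3 / 2 * p1 ^+ 2 + 1 / 2 * Num.sqrt 3 ^+ 2 * p2 ^+ 2); first by field.
  rewrite q3; lra.
have g1 : 0 < y1 by rewrite /y1; lra.
have g2 : 0 < y2 by rewrite /y2; lra.
have g3 : 0 < y3 by rewrite /y3; lra.
have : 0 < y1 * y2 + y2 * y3 + y1 * y3.
  by apply: addr_gt0; [apply: addr_gt0|]; apply: mulr_gt0.
have : (y1 + y2 + y3) ^+ 2 = y1 ^+ 2 + y2 ^+ 2 + y3 ^+ 2 + 2 * (y1 * y2 + y2 * y3 + y1 * y3).
  by ring.
rewrite s1 s2; lra.
Qed.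

Lemma closure_in_closed (T : topologicalType) (A C : set T) :
  closed C -> A `<=` C -> closure A `<=` C.
Proof. by move=> cC AC; rewrite (closure_id C).1 //; exact: closureS. Qed.

Lemma conn_split (T : topologicalType) (S X Y CX CY : set T) :
  connected S -> S `<=` X `|` Y -> closed CX -> closed CY -> X `<=` CX -> Y `<=` CY ->
  (forall p, S p -> CX p -> Y p -> False) -> (forall p, S p -> X p -> CY p -> False) ->
  S `<=` X \/ S `<=` Y.
Proof.
move=> cS SXY cX cY XC YC h1 h2.
apply: contrapT => /not_orP[/existsNP[p /not_implyP[Sp Xp]] /existsNP[q /not_implyP[Sq Yq]]].
apply: (connectedPn S).2 cS.
exists (fun b => if b then S `&` Y else S `&` X); split.
- case.
  + by exists p; split => //; case: (SXY p Sp).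
  + by exists q; split => //; case: (SXY q Sq).
- rewrite predeqE => r /=; split.
  + by move=> Sr; case: (SXY r Sr) => hr; [left|right].
  + by case=> -[].
- split.
  + rewrite predeqE => r; split => // -[cr [Sr Yr]].
    apply: (h1 r Sr) => //; apply: (closure_in_closed cX _ cr).
    by move=> z [_ /XC].
  + rewrite predeqE => r; split => // -[[Sr Xr] cr].
    apply: (h2 r Sr) => //; apply: (closure_in_closed cY _ cr).
    by move=> z [_ /YC].
Qed.

Lemma sep_A (R : realType) (v : R) (S : set (R * R)) : 0 < v < 1 / 2 ->
  connected S -> S `<=` Kcircle -> (forall p, S p -> ~ Abold v p) ->
  exists2 a, (1 <= a <= 3)%N & S `<=` Aidx v a.
Proof.
move=> h cS Sc nB.
have H := @closed_H R v.
have cov : S `<=` A1 v `|` (A2 v `|` A3 v).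
  move=> p Sp; have [a ha hA] := circle_cover h (Sc p Sp).
  by case: a ha hA => [|[|[|[|]]]] //= _ hA; [left|right; left|right; right].
have k1 : forall p, S p -> [set q | v <= xc 1 q] p -> (A2 v `|` A3 v) p -> False.
  move=> p Sp c1 [h2|h3]; apply: (nB p Sp).
  + by left; left; split => //; split => //; exact: Sc.
  + by right; split => //; split => //; exact: Sc.
have k2 : forall p, S p -> A1 v p -> ([set q | v <= xc 2 q] `|` [set q | v <= xc 3 q]) p -> False.
  move=> p Sp h1 [c2|c3]; apply: (nB p Sp).
  + by left; left; split => //; split => //; exact: Sc.
  + by right; split => //; split => //; exact: Sc.
have [S1|S23] := conn_split cS cov (H 1%N) (closedU (H 2%N) (H 3%N))
  (fun p (hp : A1 v p) => hp.2) (fun p hp => match hp with or_introl h2 => or_introl h2.2 | or_intror h3 => or_intror h3.2 end) k1 k2.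
- by exists 1%N.
- have cov2 : S `<=` A2 v `|` A3 v by [].
  have k3 : forall p, S p -> [set q | v <= xc 2 q] p -> A3 v p -> False.
    move=> p Sp c2 h3; apply: (nB p Sp); left; right; split => //; split => //; exact: Sc.
  have k4 : forall p, S p -> A2 v p -> [set q | v <= xc 3 q] p -> False.
    move=> p Sp h2 c3; apply: (nB p Sp); left; right; split => //; split => //; exact: Sc.
  have [S2|S3] := conn_split cS cov2 (H 2%N) (H 3%N) (fun p (hp : A2 v p) => hp.2)
    (fun p (hp : A3 v p) => hp.2) k3 k4.
  + by exists 2%N.
  + by exists 3%N.
Qed.

Lemma step_i (R : realType) (v : R) t (S : set (R * R)) x y : 0 < v < 1 / 2 ->
  connected S -> S `<=` Kcircle -> (forall p, S p -> ~ Abold v p) ->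
  x <= y -> (forall th, x <= th <= y -> S (cis th)) ->
  y - x <= 2 * aa v /\ connected (Kmix v t @` S) /\ Kmix v t @` S `<=` Kcircle /\
  exists x', exists y', x' <= y' /\ (forall th, x' <= th <= y' -> (Kmix v t @` S) (cis th))
    /\ lam v * (y - x) <= y' - x'.
Proof.
move=> h cS Sc nB xy hS.
have [b1 b2 b3 /andP[b4 b5] b6] := basic_ineq h.
have hpi := @pi_gt0 R; have hl := lam_gt1 h.
have v0 : 0 < v by case/andP: h.
have [k /andP[k1 k2]] := normalize (aa v) x.
set X := x - 2 * pi * k%:~R in k1 k2; set Y := y - 2 * pi * k%:~R.
have hS' : forall th, X <= th <= Y -> S (cis th).
  move=> th hth; rewrite -(cis_perz th k); apply: hS.
  by move: hth; rewrite /X /Y; rl.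
have XY : X <= Y by rewrite /X /Y; lra.
have eYX : Y - X = y - x by rewrite /X /Y; ring.
have [b [C [hC [c1 c2]]]] := classify_i h (ltac:(rewrite tt0; lra) : tt v 0 <= X) XY
  (ltac:(rewrite tt3; lra) : X < tt v 3) (fun th hth => nB _ (hS' th hth)).
case: (hC) => hb _.
split; first lra.
have [a ha SA] := sep_A h cS Sc nB.
have eK : Kmix v t @` S = Kidx v a @` S.
  apply: eq_imagel => p Sp; apply: Kmix_single => //; [exact: SA | exact: nB].
split.
  rewrite eK; apply: connected_continuous_connected => //.
  apply: continuous_in_subspaceT => p; rewrite inE => Sp.
  exact: Kidx_cont (SA p Sp).
split.
  by move=> q [p Sp <-]; exact: Kmix_circ (Sc p Sp).
exists (fC v C Y), (fC v C X).
have g := GG_grow (B := aa v - mm v) (x := X - C) (y := Y - C) h (ltac:(rl))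
  (ltac:(lra)) (ltac:(lra)) (ltac:(lra)).
rewrite -/(lam v) in g.
have eF : fC v C X - fC v C Y = GG v (Y - C) - GG v (X - C) by rewrite /fC /hK; ring.
rewrite (_ : Y - C - (X - C) = Y - X) in g; last ring.
have gp : 0 <= lam v * (Y - X) by apply: mulr_ge0; lra.
split; first lra.
split; last by rewrite -eYX; lra.
move=> s hs.
have d1 : C - aa v <= X by lra.
have d2 : Y <= C + aa v by lra.
have [th hth ek] := branch_ivt h hC d1 XY d2 hs.
exists (cis th); first by apply: hS'.
rewrite -ek; apply: Kmix_single => //.
  by apply: (A_of_angle h hC); move: hth; rl.
exact: nB (hS' th hth).
Qed.

Lemma part_i (R : realType) (v : R) (U : set (R * R)) omega : 0 < v < 1 / 2 ->
  (exists2 V : set (R * R), @open (R * R)%type V & U = V `&` Kcircle) ->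
  @connected (R * R)%type U -> U !=set0 ->
  exists N : nat, @connected (R * R)%type (Kiter v omega N @` U) /\
                     (Kiter v omega N @` U) `&` Abold v !=set0.
Proof.
move=> h hU cU hne.
have [b1 b2 b3 /andP[b4 b5] b6] := basic_ineq h.
have hpi := @pi_gt0 R; have hl := lam_gt1 h.
apply: contrapT => hno.
have nB : forall N, connected (Kiter v omega N @` U) ->
    forall p, (Kiter v omega N @` U) p -> ~ Abold v p.
  by move=> N cN p Sp Bp; apply: hno; exists N; split => //; exists p.
have Uc : U `<=` Kcircle by case: hU => V _ ->; move=> p [].
have [x0 [y0 [xy0 hU0]]] := U_arc hU hne.
set L0 := y0 - x0.
set dl := (lam v - 1) * L0.
have dl0 : 0 < dl by apply: mulr_gt0; rewrite /L0; lra.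
have ind : forall n, connected (Kiter v omega n @` U) /\ Kiter v omega n @` U `<=` Kcircle /\
    exists x, exists y, x <= y /\ (forall th, x <= th <= y -> (Kiter v omega n @` U) (cis th)) /\
    L0 + n%:R * dl <= y - x.
  elim=> [|n [cS [Sc [x [y [xy [hS hlen]]]]]]].
  - have e0 : Kiter v omega 0 @` U = U by rewrite /= image_id.
    rewrite e0; split => //; split => //.
    exists x0, y0; split; first lra; split; first exact: hU0.
    by rewrite /= mul0r addr0.
  - have [hb [cS' [Sc' [x' [y' [xy' [hS' hg]]]]]]] :=
      step_i (omega n) h cS Sc (nB n cS) xy hS.
    rewrite Kiter_img; split => //; split => //.
    exists x', y'; split => //; split => //.
    have : (lam v - 1) * L0 <= (lam v - 1) * (y - x).
      apply: ler_wpM2l; first lra.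
      have : 0 <= n%:R * dl by apply: mulr_ge0 => //; lra.
      lra.
    rewrite -[n.+1]addn1 natrD => hh; rewrite -/dl in hh; lra.
pose n := (Num.truncn (pi / dl)).+1.
have hn : pi < n%:R * dl.
  by rewrite -ltr_pdivrMr //; exact: Num.Theory.truncnS_gt.
have [cS [Sc [x [y [xy [hS hlen]]]]]] := ind n.
have [hb _] := step_i (omega n) h cS Sc (nB n cS) xy hS.
have : 0 < L0 by rewrite /L0; lra.
lra.
Qed.

Unset Implicit Arguments.

Theorem lemma1 (R : realType) (v : R) (U : set (R * R)) :
  0 < v -> v < 1 / 2 ->
  (exists2 V : set (R * R), @open (R * R)%type V & U = V `&` Kcircle) ->
  @connected (R * R)%type U -> U !=set0 ->
  (forall omega, inSigma omega ->
     exists N : nat, @connected (R * R)%type (Kiter v omega N @` U) /\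
                     (Kiter v omega N @` U) `&` Abold v !=set0) /\
  (exists omega, exists M : nat, exists a b : nat,
     inSigma omega /\ (1 <= a <= 3)%N /\ (1 <= b <= 3)%N /\ a <> b /\
     Aidx v a `&` Aidx v b `<=` Kiter v omega M @` U).
Proof.
move=> v0 v1 hU cU hne.
have h : 0 < v < 1 / 2 by apply/andP.
split.
- by move=> omega _; exact: part_i.
- exact: part_ii.
Qed.
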